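(* Let $k$ be a field, let $B$ be a unital associative $k$-algebra and let $(J_i)_{i\in I}$ be a covering of $B$, i.e.\ a finite family of two-sided ideals of $B$ with $\bigcap_{i\in I}J_i=\{0\}$. For $i,j\in I$ put $B_i=B/J_i$, $B_{ij}=B/(J_i+J_j)$, with canonical surjections $\pi_i:B\to B_i$, $\pi_{ij}:B\to B_{ij}$, and let $\pi^i_j:B_i\to B_{ij}$, $b+J_i\mapsto b+J_i+J_j$. Let $A=\bigoplus_{i\in I}B_i$ (product algebra) and $\mathcal{C}=\bigoplus_{i,j\in I}B_{ij}$. Then $\mathcal{C}$ is an $A$-bimodule with actions $$(a_i)_{i\in I}\cdot(a_{jk})_{j,k\in I}\cdot(a'_l)_{l\in I}=\big(\pi^j_k(a_j)\,a_{jk}\,\pi^k_j(a'_k)\big)_{j,k\in I}$$ for $a_i,a'_i\in B_i$, $a_{jk}\in B_{jk}$, and $\mathcal{C}$ is an $A$-coring with coproduct $$\Delta_{\mathcal{C}}\big((\pi_{ij}(b_{ij}))_{i,j\in I}\big)=\sum_{k\in I}\big(\pi_{il}(b_{ik})\big)_{i,l\in I}\otimes_A\big(\pi_{mj}(\delta_{kj}1_B)\big)_{m,j\in I}$$ (equivalently $=\sum_{k\in I}\big(\pi_{il}(\delta_{ik}1_B)\big)_{i,l\in I}\otimes_A\big(\pi_{mj}(b_{kj})\big)_{m,j\in I}$) and counit $$\varepsilon_{\mathcal{C}}\big((\pi_{ij}(b_{ij}))_{i,j\in I}\big)=(\pi_i(b_{ii}))_{i\in I},$$ for all $b_{ij}\in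 B$; in particular these maps are well defined.
   Context: Here $\delta_{kj}1_B$ denotes $1_B$ if $k=j$ and $0$ otherwise. For a $k$-algebra $A$, an $A$-coring is an $A$-bimodule $\mathcal{C}$ together with $A$-bimodule maps $\Delta_{\mathcal{C}}:\mathcal{C}\to\mathcal{C}\otimes_A\mathcal{C}$ and $\varepsilon_{\mathcal{C}}:\mathcal{C}\to A$ such that $(\Delta_{\mathcal{C}}\otimes_A\mathrm{id})\circ\Delta_{\mathcal{C}}=(\mathrm{id}\otimes_A\Delta_{\mathcal{C}})\circ\Delta_{\mathcal{C}}$ and $(\varepsilon_{\mathcal{C}}\otimes_A\mathrm{id})\circ\Delta_{\mathcal{C}}=(\mathrm{id}\otimes_A\varepsilon_{\mathcal{C}})\circ\Delta_{\mathcal{C}}=\mathrm{id}_{\mathcal{C}}$ (with the canonical identifications $A\otimes_A\mathcal{C}\cong\mathcal{C}\cong\mathcal{C}\otimes_A A$). *)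

(* Defs.v *)
From HB Require Import structures.
From mathcomp Require Import all_boot all_algebra.
Set Implicit Arguments. Unset Strict Implicit. Unset Printing Implicit Defensive.
Import GRing.Theory.
Local Open Scope ring_scope.

Definition two_sided_ideal (B : pzRingType) (J : B -> Prop) : Prop :=
  [/\ J 0, (forall x y, J x -> J y -> J (x - y)),
      (forall a x, J x -> J (a * x)) & (forall a x, J x -> J (x * a))].

Definition ideal_sum (B : pzRingType) (J1 J2 : B -> Prop) : B -> Prop :=
  fun x => exists y z, [/\ J1 y, J2 z & x = y + z].

Definition covering (B : pzRingType) (I : finType) (J : I -> B -> Prop) : Prop :=
  (forall i, two_sided_ideal (J i)) /\ (forall x, (forall i, J i x) -> x = 0).

(* The ring A is presented by a zmodType TA of representatives together    *)
(* with a congruence eqA and a multiplication mulA / unit oneA; the        *)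
(* A-bimodule C by a zmodType TC of representatives with a relation eqC    *)
(* (the quotient TC/eqC is C) and actions la, ra on representatives.       *)
(* Elements of C (x)_A C are given by finite formal sums of pairs of       *)
(* representatives (seq (TC * TC)); two such sums are equal in C (x)_A C   *)
(* iff every A-balanced biadditive map (well defined on C x C) into any    *)
(* abelian group takes the same value on them.  Same for C (x)_A C (x)_A C. *)

Section Coring.
Variables (TA TC : zmodType).
Variables (eqA : TA -> TA -> Prop) (mulA : TA -> TA -> TA) (oneA : TA).
Variables (eqC : TC -> TC -> Prop) (la : TA -> TC -> TC) (ra : TC -> TA -> TC).

Definition balanced2 (G : zmodType) (f : TC -> TC -> G) : Prop :=
  [/\ (forall x x' y y', eqC x x' -> eqC y y' -> f x y = f x' y'),
      (forall x x' y, f (x + x') y = f x y + f x' y),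
      (forall x y y', f x (y + y') = f x y + f x y')
    & (forall x a y, f (ra x a) y = f x (la a y))].

Definition tensor2_eq (s t : seq (TC * TC)) : Prop :=
  forall (G : zmodType) (f : TC -> TC -> G), balanced2 f ->
    \sum_(p <- s) f p.1 p.2 = \sum_(p <- t) f p.1 p.2.

Definition balanced3 (G : zmodType) (f : TC -> TC -> TC -> G) : Prop :=
  [/\ (forall x x' y y' z z', eqC x x' -> eqC y y' -> eqC z z' ->
         f x y z = f x' y' z'),
      (forall x x' y z, f (x + x') y z = f x y z + f x' y z),
      (forall x y y' z, f x (y + y') z = f x y z + f x y' z),
      (forall x y z z', f x y (z + z') = f x y z + f x y z')
    & ((forall x a y z, f (ra x a) y z = f x (la a y) z)
       /\ (forall x y a z, f x (ra y a) z = f x y (la a z)))].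

Definition tensor3_eq (s t : seq (TC * TC * TC)) : Prop :=
  forall (G : zmodType) (f : TC -> TC -> TC -> G), balanced3 f ->
    \sum_(p <- s) f p.1.1 p.1.2 p.2 = \sum_(p <- t) f p.1.1 p.1.2 p.2.

Definition zmod_congruence (T : zmodType) (e : T -> T -> Prop) : Prop :=
  [/\ (forall x, e x x), (forall x y, e x y -> e y x),
      (forall x y z, e x y -> e y z -> e x z),
      (forall x x' y y', e x x' -> e y y' -> e (x + y) (x' + y'))
    & (forall x x', e x x' -> e (- x) (- x'))].

Definition is_bimodule : Prop :=
  [/\ zmod_congruence eqC /\
      ((forall a a' c c', eqA a a' -> eqC c c' -> eqC (la a c) (la a' c'))
       /\ (forall a a' c c', eqA a a' -> eqC c c' -> eqC (ra c a) (ra c' a'))),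
      (forall c, eqC (la oneA c) c /\ eqC (ra c oneA) c),
      (forall a a' c, eqC (la (mulA a a') c) (la a (la a' c))
                   /\ eqC (ra c (mulA a a')) (ra (ra c a) a')
                   /\ eqC (ra (la a c) a') (la a (ra c a'))),
      (forall a c c', eqC (la a (c + c')) (la a c + la a c')
                   /\ eqC (ra (c + c') a) (ra c a + ra c' a))
    & forall a a' c, eqC (la (a + a') c) (la a c + la a' c)
                   /\ eqC (ra c (a + a')) (ra c a + ra c a')].

Definition is_coring (Delta : TC -> seq (TC * TC)) (eps : TC -> TA) : Prop :=
  [/\ is_bimodule,
      [/\ (forall c c', eqC c c' -> tensor2_eq (Delta c) (Delta c')),
          (forall c c', tensor2_eq (Delta (c + c')) (Delta c ++ Delta c'))
        & (forall a c a', tensor2_eq (Delta (ra (la a c) a'))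
                             [seq (la a p.1, ra p.2 a') | p <- Delta c])],
      [/\ (forall c c', eqC c c' -> eqA (eps c) (eps c')),
          (forall c c', eqA (eps (c + c')) (eps c + eps c'))
        & (forall a c a', eqA (eps (ra (la a c) a')) (mulA (mulA a (eps c)) a'))],
      (forall c, tensor3_eq
         [seq (q.1, q.2, p.2) | p <- Delta c, q <- Delta p.1]
         [seq (p.1, q.1, q.2) | p <- Delta c, q <- Delta p.2])
    & (* counit laws, via A (x)_A C = C = C (x)_A A *)
      (forall c, eqC (\sum_(p <- Delta c) la (eps p.1) p.2) c
              /\ eqC (\sum_(p <- Delta c) ra p.1 (eps p.2)) c)].

End Coring.

(* A = (+)_i B/J_i is presented by {ffun I -> B} (a_i representing         *)
(* a_i + J_i), C = (+)_{i,j} B/(J_i+J_j) by {ffun I * I -> B}.            *)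
(* On representatives, pi^j_k is the identity.                            *)

Section Concrete.
Variables (B : pzRingType) (I : finType) (J : I -> B -> Prop).

Definition eqA_J (a a' : {ffun I -> B}) : Prop := forall i, J i (a i - a' i).

Definition eqC_J (c c' : {ffun I * I -> B}) : Prop :=
  forall i j, ideal_sum (J i) (J j) (c (i, j) - c' (i, j)).

Definition mulA_J (a a' : {ffun I -> B}) : {ffun I -> B} := [ffun i => a i * a' i].
Definition oneA_J : {ffun I -> B} := [ffun=> 1].

Definition lact_J (a : {ffun I -> B}) (c : {ffun I * I -> B}) : {ffun I * I -> B} :=
  [ffun jk => a jk.1 * c jk].
Definition ract_J (c : {ffun I * I -> B}) (a : {ffun I -> B}) : {ffun I * I -> B} :=
  [ffun jk => c jk * a jk.2].

Definition Delta_J (c : {ffun I * I -> B}) : seq ({ffun I * I -> B} * {ffun I * I -> B}) :=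
  [seq ([ffun il : I * I => c (il.1, k)],
        [ffun mj : I * I => if k == mj.2 then 1 else 0]) | k <- enum I].

Definition Delta'_J (c : {ffun I * I -> B}) : seq ({ffun I * I -> B} * {ffun I * I -> B}) :=
  [seq ([ffun il : I * I => if il.1 == k then 1 else 0],
        [ffun mj : I * I => c (k, mj.2)]) | k <- enum I].

Definition eps_J (c : {ffun I * I -> B}) : {ffun I -> B} := [ffun i => c (i, i)].

End Concrete.

(* Main.v *)
Require Import Defs.

From HB Require Import structures.
From mathcomp Require Import all_boot all_algebra.
Set Implicit Arguments. Unset Strict Implicit. Unset Printing Implicit Defensive.
Import GRing.Theory.
Local Open Scope ring_scope.

Section S.
Variables (B : pzRingType) (I : finType) (J : I -> B -> Prop).
Hypothesis HJ : forall i, two_sided_ideal (J i).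
Local Notation T := {ffun I * I -> B}.

Lemma J0 i : J i 0. Proof. by case: (HJ i). Qed.
Lemma JB i x y : J i x -> J i y -> J i (x - y). Proof. by case: (HJ i) => _ h _ _; apply: h. Qed.
Lemma JN i x : J i x -> J i (- x). Proof. by move=> h; rewrite -sub0r; apply: JB (J0 _) h. Qed.
Lemma JD i x y : J i x -> J i y -> J i (x + y).
Proof. by move=> hx hy; rewrite -[y]opprK; apply: JB => //; apply: JN. Qed.
Lemma JMl i a x : J i x -> J i (a * x). Proof. by case: (HJ i) => _ _ h _; apply: h. Qed.
Lemma JMr i a x : J i x -> J i (x * a). Proof. by case: (HJ i) => _ _ _ h; apply: h. Qed.

Local Notation IS i j := (ideal_sum (J i) (J j)).
Lemma IS0 i j : IS i j 0. Proof. by exists 0, 0; split; rewrite ?addr0 //; apply: J0. Qed.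
Lemma ISl i j x : J i x -> IS i j x. Proof. by exists x, 0; split; rewrite ?addr0 //; apply: J0. Qed.
Lemma ISr i j x : J j x -> IS i j x. Proof. by exists 0, x; split; rewrite ?add0r //; apply: J0. Qed.
Lemma ISD i j x y : IS i j x -> IS i j y -> IS i j (x + y).
Proof.
move=> [a [b [ha hb ->]]] [c [d [hc hd ->]]]; exists (a + c), (b + d); split.
- exact: JD. - exact: JD. - by rewrite addrACA.
Qed.
Lemma ISN i j x : IS i j x -> IS i j (- x).
Proof. move=> [a [b [ha hb ->]]]; exists (- a), (- b); split; rewrite ?opprD //; exact: JN. Qed.
Lemma ISMl i j c x : IS i j x -> IS i j (c * x).
Proof. move=> [a [b [ha hb ->]]]; exists (c * a), (c * b); split; rewrite ?mulrDr //; exact: JMl. Qed.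
Lemma ISMr i j c x : IS i j x -> IS i j (x * c).
Proof. move=> [a [b [ha hb ->]]]; exists (a * c), (b * c); split; rewrite ?mulrDl //; exact: JMr. Qed.

Local Notation eqC := (eqC_J J).
Lemma eqC_refl x : eqC x x. Proof. by move=> i j; rewrite subrr; apply: IS0. Qed.
Lemma eqC_eq x y : x = y -> eqC x y. Proof. by move=> ->; apply: eqC_refl. Qed.
Lemma eqA_refl (a : {ffun I -> B}) : eqA_J J a a. Proof. by move=> i; rewrite subrr; apply: J0. Qed.
Lemma eqA_eq (a b : {ffun I -> B}) : a = b -> eqA_J J a b. Proof. by move=> ->; apply: eqA_refl. Qed.

Lemma if10M (b : bool) (y : B) : (if b then 1 else 0) * y = if b then y else 0.
Proof. by case: b; rewrite ?mul1r ?mul0r. Qed.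
Lemma Mif10 (b : bool) (y : B) : y * (if b then 1 else 0) = if b then y else 0.
Proof. by case: b; rewrite ?mulr1 ?mulr0. Qed.
Lemma sum_if (X : finType) (F : X -> B) a : \sum_i (if i == a then F i else 0) = F a.
Proof. by rewrite -big_mkcond big_pred1_eq. Qed.
Lemma sum_if' (X : finType) (F : X -> B) a : \sum_i (if a == i then F i else 0) = F a.
Proof. by under eq_bigr do rewrite eq_sym; rewrite sum_if. Qed.

Local Notation la := (@lact_J B I).
Local Notation ra := (@ract_J B I).
Local Notation Xk k c := ([ffun il : I * I => c (il.1, k)]).
Local Notation ek k := ([ffun mj : I * I => if k == mj.2 then (1 : B) else 0]).
Local Notation dk k := ([ffun il : I * I => if il.1 == k then (1 : B) else 0]).
Local Notation Yk k c := ([ffun mj : I * I => c (k, mj.2)]).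
Local Notation cst b := ([ffun _ : I => b]).

Section Bal2.
Variables (G : zmodType) (f : T -> T -> G).
Hypothesis Hf : balanced2 eqC la ra f.

Lemma fDl x x' y : f (x + x') y = f x y + f x' y. Proof. by case: Hf. Qed.
Lemma fDr x y y' : f x (y + y') = f x y + f x y'. Proof. by case: Hf. Qed.
Lemma fA x a y : f (ra x a) y = f x (la a y). Proof. by case: Hf. Qed.
Lemma fcongl x x' y : eqC x x' -> f x y = f x' y.
Proof. by case: Hf => h _ _ _ e; apply: h => //; apply: eqC_refl. Qed.
Lemma fcongr x y y' : eqC y y' -> f x y = f x y'.
Proof. by case: Hf => h _ _ _ e; apply: h => //; apply: eqC_refl. Qed.
Lemma f0l y : f 0 y = 0.
Proof. have h := fDl 0 0 y; rewrite addr0 in h. by apply: (addrI (f 0 y)); rewrite addr0 -h. Qed.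
Lemma f0r x : f x 0 = 0.
Proof. have h := fDr x 0 0; rewrite addr0 in h. by apply: (addrI (f x 0)); rewrite addr0 -h. Qed.
Lemma fsuml (X : Type) (r : seq X) (F : X -> T) y :
  f (\sum_(k <- r) F k) y = \sum_(k <- r) f (F k) y.
Proof. exact: (big_morph (fun x => f x y) (fun a b => fDl a b y) (f0l y)). Qed.
Lemma fsumr (X : Type) (r : seq X) (F : X -> T) x :
  f x (\sum_(k <- r) F k) = \sum_(k <- r) f x (F k).
Proof. exact: (big_morph (fun y => f x y) (fun a b => fDr x a b) (f0r x)). Qed.

Lemma DD' (c : T) : \sum_k f (Xk k c) (ek k) = \sum_i f (dk i) (Yk i c).
Proof.
have HX k : Xk k c = \sum_i ra (dk i) (cst (c (i,k))).
  apply/ffunP => -[i' l]; rewrite sum_ffunE !ffunE /=.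
  under eq_bigr do rewrite !ffunE /= if10M.
  by rewrite sum_if'.
have HY i : Yk i c = \sum_k la (cst (c (i,k))) (ek k).
  apply/ffunP => -[m j]; rewrite sum_ffunE !ffunE /=.
  under eq_bigr do rewrite !ffunE /= Mif10.
  by rewrite sum_if.
under eq_bigr do rewrite HX fsuml.
under eq_bigr do under eq_bigr do rewrite fA.
rewrite exchange_big /=; apply: eq_bigr => i _.
by rewrite HY fsumr.
Qed.
Lemma Zzero (D : T) : (forall i j, IS i j (D (i,j))) -> \sum_k f (Xk k D) (ek k) = 0.
Proof.
move=> hD.
pose Z (D : T) := \sum_k f (Xk k D) (ek k).
have ZD (D1 D2 : T) : Z (D1 + D2) = Z D1 + Z D2.
  rewrite /Z -big_split /=; apply: eq_bigr => k _; rewrite -fDl; congr f.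
  by apply/ffunP => p; rewrite !ffunE.
have Z0 : Z 0 = 0.
  apply: big1 => k _; rewrite (_ : Xk k (0 : T) = 0) ?f0l //.
  by apply/ffunP => p; rewrite !ffunE.
pose E (p : I * I) (b : B) : T := [ffun q => if q == p then b else 0].
have Dsum : D = \sum_p E p (D p).
  by apply/ffunP => q; rewrite sum_ffunE; under eq_bigr do rewrite ffunE; rewrite sum_if'.
rewrite -/(Z D) Dsum (big_morph Z ZD Z0); apply: big1 => -[i j] _.
have [y [z [hy hz ->]]] := hD i j.
rewrite (_ : E (i, j) (y + z) = E (i, j) y + E (i, j) z); last first.
  by apply/ffunP => q; rewrite !ffunE; case: eqP; rewrite ?addr0.
rewrite ZD.
have -> : Z (E (i, j) y) = 0.
  apply: big1 => k _; rewrite (fcongl (x' := 0)) ?f0l //.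
  move=> i' l; rewrite !ffunE /= subr0; case: eqP => [[-> _]|_].
  - exact: ISl. - exact: IS0.
have -> : Z (E (i, j) z) = 0.
  rewrite /Z DD'; apply: big1 => i' _; rewrite (@fcongr _ _ 0) ?f0r //.
  move=> m n; rewrite !ffunE /= subr0; case: eqP => [[_ ->]|_].
  - exact: ISr. - exact: IS0.
by rewrite addr0.
Qed.
End Bal2.

Section Bal3.
Variables (G : zmodType) (f : T -> T -> T -> G).
Hypothesis Hf : balanced3 eqC la ra f.
Lemma gDm x y y' z : f x (y + y') z = f x y z + f x y' z. Proof. by case: Hf. Qed.
Lemma g0m x z : f x 0 z = 0.
Proof. have h := gDm x 0 0 z; rewrite addr0 in h. by apply: (addrI (f x 0 z)); rewrite addr0 -h. Qed.
Lemma gsumm (X : Type) (r : seq X) (F : X -> T) x z :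
  f x (\sum_(k <- r) F k) z = \sum_(k <- r) f x (F k) z.
Proof. exact: (big_morph (fun y => f x y z) (fun a b => gDm x a b z) (g0m x z)). Qed.
End Bal3.
End S.
Theorem proposition3p3 (k : fieldType) (B : algType k) (I : finType)
    (J : I -> B -> Prop) :
  covering J ->
  is_coring (eqA_J J) (@mulA_J B I) (@oneA_J B I) (eqC_J J)
    (@lact_J B I) (@ract_J B I) (@Delta_J B I) (@eps_J B I)
  /\ (forall c : {ffun I * I -> B},
        tensor2_eq (eqC_J J) (@lact_J B I) (@ract_J B I)
          (Delta_J c) (Delta'_J c)).
Proof.
move=> [HJ _].
have SD c (G : zmodType) (F : _ -> G) : \sum_(p <- Delta_J c) F p =
   \sum_k F ([ffun il : I * I => c (il.1, k)], [ffun mj : I * I => if k == mj.2 then (1 : B) else 0]).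
  by rewrite /Delta_J big_map big_enum.
split; last first.
  move=> c G f Hf; rewrite SD /Delta'_J big_map big_enum /=.
  exact: (DD' Hf c).
split.
- split.
  + split; [split|split].
    * by move=> x i j; rewrite subrr; apply: (IS0 HJ).
    * by move=> x y h i j; have := ISN HJ (h i j); rewrite opprB.
    * move=> x y z h1 h2 i j.
      rewrite (_ : x (i,j) - z (i,j) = (x (i,j) - y (i,j)) + (y (i,j) - z (i,j))).
        by apply: (ISD HJ); [apply: h1 | apply: h2].
      by rewrite addrA subrK.
    * move=> x x' y y' h1 h2 i j; rewrite !ffunE opprD addrACA.
      by apply: (ISD HJ); [apply: h1 | apply: h2].
    * by move=> x x' h i j; rewrite !ffunE -opprD; apply: (ISN HJ); apply: h.
    * move=> a a' c c' ha hc i j; rewrite !ffunE /=.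
      rewrite (_ : a i * c (i, j) - a' i * c' (i, j) =
                   (a i - a' i) * c (i, j) + a' i * (c (i, j) - c' (i, j))).
        by apply: (ISD HJ); [apply: (ISl HJ); apply: (JMr HJ); apply: ha | apply: (ISMl HJ); apply: hc].
      by rewrite mulrBl mulrBr addrA subrK.
    * move=> a a' c c' ha hc i j; rewrite !ffunE /=.
      rewrite (_ : c (i, j) * a j - c' (i, j) * a' j =
                   (c (i, j) - c' (i, j)) * a j + c' (i, j) * (a j - a' j)).
        by apply: (ISD HJ); [apply: (ISMr HJ); apply: hc | apply: (ISr HJ); apply: (JMl HJ); apply: ha].
      by rewrite mulrBl mulrBr addrA subrK.
  + by move=> c; split; apply: (eqC_eq HJ); apply/ffunP => -[i j]; rewrite !ffunE /= ?mul1r ?mulr1.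
  + by move=> a a' c; split; [|split]; apply: (eqC_eq HJ); apply/ffunP => -[i j]; rewrite !ffunE /= ?mulrA.
  + by move=> a c c'; split; apply: (eqC_eq HJ); apply/ffunP => -[i j]; rewrite !ffunE /= ?mulrDr ?mulrDl.
  + by move=> a a' c; split; apply: (eqC_eq HJ); apply/ffunP => -[i j]; rewrite !ffunE /= ?mulrDr ?mulrDl.
- split.
  + move=> c c' hc G f Hf; rewrite !SD /=.
    have -> : \sum_k0 f [ffun il : I * I => c (il.1, k0)] [ffun mj : I * I => if k0 == mj.2 then (1 : B) else 0]
       = \sum_k0 f [ffun il : I * I => (c - c') (il.1, k0)] [ffun mj : I * I => if k0 == mj.2 then (1 : B) else 0]
       + \sum_k0 f [ffun il : I * I => c' (il.1, k0)] [ffun mj : I * I => if k0 == mj.2 then (1 : B) else 0].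
      rewrite -big_split /=; apply: eq_bigr => k0 _; rewrite -(fDl Hf); congr f.
      by apply/ffunP => p; rewrite !ffunE subrK.
    rewrite (Zzero HJ Hf) ?add0r //.
    by move=> i j; rewrite !ffunE; apply: hc.
  + move=> c c' G f Hf; rewrite big_cat (SD c) (SD c') /Delta_J big_map big_enum /= -big_split /=; apply: eq_big => [//|k0 _].
    by rewrite -(fDl Hf); congr f; apply/ffunP => p; rewrite !ffunE.
  + move=> a c a' G f Hf; rewrite /Delta_J !big_map /=; apply: eq_bigr => k0 _.
    rewrite (_ : ract_J [ffun mj : I * I => if k0 == mj.2 then (1 : B) else 0] a' = lact_J [ffun _ : I => a' k0] [ffun mj : I * I => if k0 == mj.2 then (1 : B) else 0]).
      rewrite -(fA Hf); congr f.
      by apply/ffunP => -[i l]; rewrite !ffunE /=.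
    apply/ffunP => -[m j]; rewrite !ffunE /=.
    by case: eqP => [->|_]; rewrite ?mul1r ?mulr1 ?mul0r ?mulr0.
- split.
  + move=> c c' hc i; rewrite !ffunE /=.
    have [y [z [hy hz ->]]] := hc i i; exact: (JD HJ hy hz).
  + by move=> c c'; apply: (eqA_eq HJ); apply/ffunP => i; rewrite !ffunE.
  + by move=> a c a'; apply: (eqA_eq HJ); apply/ffunP => i; rewrite !ffunE /= ?mulrA.
- move=> c G f Hf; rewrite !big_allpairs_dep /Delta_J !big_map /=.
  apply: eq_bigr => j _.
  rewrite !big_map -enumT big_enum /=.
  pose ones := [ffun _ : I * I => 1 : B].
  have L k0 : [ffun il : I * I => [ffun il0 : I * I => c (il0.1, j)] (il.1, k0)] = [ffun il : I * I => c (il.1, j)].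
    by apply/ffunP => p; rewrite !ffunE.
  have R k0 : [ffun il : I * I => [ffun mj : I * I => if j == mj.2 then (1 : B) else 0] (il.1, k0)] = if j == k0 then ones else 0.
    by apply/ffunP => p; rewrite !ffunE; case: (j == k0); rewrite ?ffunE.
  under eq_bigr do rewrite L.
  under [RHS]eq_bigr do rewrite R.
  rewrite -(gsumm Hf) big_enum [RHS](bigD1 j) //= eqxx.
  rewrite [X in _ + X]big1 ?addr0; last first.
    by move=> k0 hk; rewrite eq_sym (negbTE hk) (g0m Hf).
  congr f.
  apply/ffunP => -[m n]; rewrite sum_ffunE ffunE.
  rewrite (eq_bigr (fun k0 => if k0 == n then (1:B) else 0)); last by move=> k0 _; rewrite ffunE eq_sym.
  exact: (sum_if (fun _ => 1)).
- move=> c; split; apply: (eqC_eq HJ); rewrite /Delta_J big_map big_enum /=;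
    apply/ffunP => -[m j]; rewrite sum_ffunE /=; under eq_bigr do rewrite !ffunE /=.
  + under eq_bigr do rewrite Mif10. by rewrite sum_if.
  + under eq_bigr do rewrite Mif10. by rewrite sum_if.
Qed.
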